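(* Let $G$ be a recursively presented group. Then for every finite generating set $S$ of $G$, the skeleton subshift $X_{G,S}$ is effective.
   Context: $G$ is recursively presented if $G\cong\mathbb{F}_S/\langle\langle R\rangle\rangle$ for some finite set $S$ and recursively enumerable set $R$ of words. For a finite generating set $S$, the skeleton subshift $X_{G,S}\subseteq(S\cup S^{-1})^{\mathbb{Z}}$ is the set of bi-infinite sequences none of whose non-empty finite factors represents $1_G$. A subshift over a finite alphabet is a set of bi-infinite sequences avoiding all words of a set $\mathcal F$ of forbidden finite words; it is effective if $\mathcal F$ can be chosen to be a decidable language. *)

(* Defs.v *)
From Stdlib Require Import Arith List ZArith Relations.
Import ListNotations.

Record group := Group {
  carrier :> Type;
  gmul : carrier -> carrier -> carrier;
  gone : carrier;
  ginv : carrier -> carrier;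
  gassoc : forall x y z, gmul x (gmul y z) = gmul (gmul x y) z;
  gmul1l : forall x, gmul gone x = x;
  gmul1r : forall x, gmul x gone = x;
  gmulVl : forall x, gmul (ginv x) x = gone;
  gmulVr : forall x, gmul x (ginv x) = gone
}.

Definition prodG (G : group) (l : list G) : G := fold_right (@gmul G) (@gone G) l.

Inductive rcode : Type :=
| RZero : rcode
| RSucc : rcode
| RProj : nat -> rcode
| RComp : rcode -> list rcode -> rcode
| RPrec : rcode -> rcode -> rcode
| RMu   : rcode -> rcode.

Inductive reval : rcode -> list nat -> nat -> Prop :=
| ev_zero v : reval RZero v 0
| ev_succ x v : reval RSucc (x :: v) (S x)
| ev_proj i v : i < length v -> reval (RProj i) v (nth i v 0)
| ev_comp f gs v ys y : revals gs v ys -> reval f ys y -> reval (RComp f gs) v y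
| ev_prec0 f g v y : reval f v y -> reval (RPrec f g) (0 :: v) y
| ev_precS f g n v r y :
    reval (RPrec f g) (n :: v) r -> reval g (n :: r :: v) y ->
    reval (RPrec f g) (S n :: v) y
| ev_mu f v n :
    reval f (n :: v) 0 ->
    (forall m, m < n -> exists k, reval f (m :: v) (S k)) ->
    reval (RMu f) v n
with revals : list rcode -> list nat -> list nat -> Prop :=
| evs_nil v : revals [] v []
| evs_cons g gs v y ys : reval g v y -> revals gs v ys -> revals (g :: gs) v (y :: ys).

Definition decidable_set (P : nat -> Prop) : Prop :=
  exists c : rcode, forall m, (P m -> reval c [m] 1) /\ (~ P m -> reval c [m] 0).

Definition re_set (P : nat -> Prop) : Prop :=
  exists c : rcode, forall m, P m <-> exists y, reval c [m] y.

Definition cpair (x y : nat) : nat := (x + y) * (x + y + 1) / 2 + y.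
Fixpoint code_list (l : list nat) : nat :=
  match l with
  | [] => 0
  | x :: l' => S (cpair x (code_list l'))
  end.

(** A letter of F_T with T = {t_0, ..., t_(n-1)}: (i, false) = t_i, (i, true) = t_i^-1. *)
Definition letter := (nat * bool)%type.
Definition letter_code (a : letter) : nat := 2 * fst a + (if snd a then 1 else 0).
Definition word_code (w : list letter) : nat := code_list (map letter_code w).

Definition word_over (n : nat) (w : list letter) : Prop := Forall (fun a => fst a < n) w.

Inductive pstep (n : nat) (R : list letter -> Prop) : list letter -> list letter -> Prop :=
| ps_free u v i b : i < n -> pstep n R (u ++ v) (u ++ (i, b) :: (i, negb b) :: v)
| ps_rel u v r : R r -> pstep n R (u ++ v) (u ++ r ++ v).

Definition trivial_in_pres (n : nat) (R : list letter -> Prop) (w : list letter) : Prop :=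
  clos_refl_sym_trans (list letter) (pstep n R) w [].

Definition eval_word (G : group) (gen : nat -> G) (w : list letter) : G :=
  prodG G (map (fun a : letter => if snd a then ginv G (gen (fst a)) else gen (fst a)) w).

(** G is isomorphic to F_T / <<R>> with T finite and R r.e.: there is a
    surjective homomorphism F_T -> G (determined by gen) with kernel <<R>>. *)
Definition recursively_presented (G : group) : Prop :=
  exists (n : nat) (gen : nat -> G) (R : list letter -> Prop),
    (forall r, R r -> word_over n r) /\
    re_set (fun m => exists w, word_code w = m /\ R w) /\
    (forall g : G, exists w, word_over n w /\ eval_word G gen w = g) /\
    (forall w, word_over n w ->
       (eval_word G gen w = gone G <-> trivial_in_pres n R w)).

Definition alph (G : group) (S : list G) (g : G) : Prop :=
  exists h, In h S /\ (g = h \/ g = ginv G h).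

Definition generates (G : group) (S : list G) : Prop :=
  forall g : G, exists l : list G, Forall (alph G S) l /\ prodG G l = g.

Definition factor {A : Type} (x : Z -> A) (i : Z) (n : nat) : list A :=
  map (fun j => x (i + Z.of_nat j)%Z) (seq 0 n).

Definition skeleton (G : group) (S : list G) (x : Z -> G) : Prop :=
  (forall i, alph G S (x i)) /\
  (forall i n, 0 < n -> prodG G (factor x i n) <> gone G).

(** X is an effective subshift over the finite alphabet A: after numbering the
    alphabet as a_0, ..., a_(k-1), X is the set of A-configurations avoiding a
    decidable set F of finite words. *)
Definition effective_subshift {T : Type} (A : T -> Prop) (X : (Z -> T) -> Prop) : Prop :=
  exists (k : nat) (a : nat -> T),
    (forall i j, i < k -> j < k -> a i = a j -> i = j) /\
    (forall t, A t <-> exists i, i < k /\ a i = t) /\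
    exists F : list nat -> Prop,
      (forall w, F w -> Forall (fun i => i < k) w) /\
      decidable_set (fun m => exists w, code_list w = m /\ F w) /\
      (forall x, X x <->
         ((forall i, A (x i)) /\
          (forall i w, F w -> factor x i (length w) <> map a w))).

(* Main.v *)
Require Import Defs.
From Stdlib Require Import Arith List ZArith Relations Lia Bool Classical.
Import ListNotations.


Definition Rep (a : nat) (f : list nat -> nat) : Prop :=
  exists c, forall v, length v = a -> reval c v (f v).

Lemma rep_ext a f g : Rep a f -> (forall v, length v = a -> f v = g v) -> Rep a g.
Proof. intros [c Hc] E. exists c. intros v Hv. rewrite <- E by auto. auto. Qed.

Lemma rep_var a i : Rep a (fun v => nth i v 0).
Proof.
  destruct (lt_dec i a).
  - exists (RProj i). intros v Hv. constructor. lia.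
  - exists RZero. intros v Hv. rewrite nth_overflow by lia. constructor.
Qed.

Lemma rep_zero a : Rep a (fun _ => 0).
Proof. exists RZero. intros. constructor. Qed.

Lemma rep_list a (fs : list (list nat -> nat)) :
  Forall (fun f => Rep a f) fs ->
  exists cs, forall v, length v = a -> revals cs v (map (fun f => f v) fs).
Proof.
  induction 1 as [|f fs [c Hc] _ [cs Hcs]].
  - exists []. intros. constructor.
  - exists (c :: cs). intros. simpl. constructor; auto.
Qed.

Lemma rep_call a (g : list nat -> nat) (fs : list (list nat -> nat)) :
  Forall (fun f => Rep a f) fs -> Rep (length fs) g ->
  Rep a (fun v => g (map (fun f => f v) fs)).
Proof.
  intros H [cg Hg]. destruct (rep_list a fs H) as [cs Hcs].
  exists (RComp cg cs). intros v Hv. econstructor. apply Hcs; auto.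
  apply Hg. rewrite length_map. auto.
Qed.

Lemma rep_suc a f : Rep a f -> Rep a (fun v => S (f v)).
Proof.
  intros Hf.
  assert (H1 : Rep 1 (fun v => S (nth 0 v 0))).
  { exists RSucc. intros v Hv. destruct v as [|x [|]]; simpl in Hv; try lia. constructor. }
  pose proof (rep_call a _ [f] (Forall_cons _ Hf (Forall_nil _)) H1). simpl in H. exact H.
Qed.

Lemma rep_prec a f g : Rep a f -> Rep (S (S a)) g ->
  Rep (S a) (fun v => nat_rect (fun _ => nat) (f (tl v)) (fun i r => g (i :: r :: tl v)) (hd 0 v)).
Proof.
  intros [cf Hf] [cg Hg]. exists (RPrec cf cg). intros v Hv.
  destruct v as [|n w]; simpl in Hv; try lia. simpl.
  induction n; simpl.
  - constructor. apply Hf. lia.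
  - econstructor. apply IHn. apply Hg. simpl. lia.
Qed.

Lemma map_nth_seq (v : list nat) : map (fun f => f v) (map (fun j (w : list nat) => nth j w 0) (seq 0 (length v))) = v.
Proof.
  rewrite map_map. simpl.
  induction v using rev_ind; simpl; auto.
  rewrite length_app. simpl. rewrite Nat.add_1_r, seq_S, map_app. simpl.
  rewrite app_nth2 by lia. rewrite Nat.sub_diag. simpl. f_equal.
  rewrite <- IHv at 2. apply map_ext_in. intros j Hj. apply in_seq in Hj. rewrite app_nth1 by lia. auto.
Qed.

Lemma rep_projs a : Forall (fun f => Rep a f) (map (fun j (w : list nat) => nth j w 0) (seq 0 a)).
Proof. apply Forall_forall. intros f Hf. apply in_map_iff in Hf. destruct Hf as [j [<- _]]. apply rep_var. Qed.

Lemma rep_rec a (N b : list nat -> nat) (s : list nat -> nat) :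
  Rep a N -> Rep a b -> Rep (S (S a)) s ->
  Rep a (fun v => nat_rect (fun _ => nat) (b v) (fun i r => s (i :: r :: v)) (N v)).
Proof.
  intros HN Hb Hs.
  pose proof (rep_prec a b s Hb Hs) as H.
  pose proof (rep_call a (fun v => nat_rect (fun _ => nat) (b (tl v)) (fun i r => s (i :: r :: tl v)) (hd 0 v)) (N :: map (fun j (w : list nat) => nth j w 0) (seq 0 a))
               (Forall_cons _ HN (rep_projs a))) as H2.
  simpl in H2. rewrite length_map, length_seq in H2. specialize (H2 H).
  eapply rep_ext. apply H2. intros v Hv. simpl. subst a. rewrite map_nth_seq. reflexivity.
Qed.

Inductive ex : Type :=
| Var (i : nat)
| Zero
| Suc (e : ex)
| Rec (N b s : ex)
| Call (f : ex) (args : list ex).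

Fixpoint den (e : ex) (env : list nat) {struct e} : nat :=
  match e with
  | Var i => nth i env 0
  | Zero => 0
  | Suc e => S (den e env)
  | Rec N b s => nat_rect (fun _ => nat) (den b env) (fun i r => den s (i :: r :: env)) (den N env)
  | Call f args => den f (map (fun a => den a env) args)
  end.

Fixpoint ex_ind2 (P : ex -> Prop)
  (HV : forall i, P (Var i)) (HZ : P Zero) (HS : forall e, P e -> P (Suc e))
  (HR : forall N b s, P N -> P b -> P s -> P (Rec N b s))
  (HC : forall f args, P f -> Forall P args -> P (Call f args)) (e : ex) : P e :=
  match e with
  | Var i => HV i
  | Zero => HZ
  | Suc e => HS e (ex_ind2 P HV HZ HS HR HC e)
  | Rec N b s => HR N b s (ex_ind2 P HV HZ HS HR HC N) (ex_ind2 P HV HZ HS HR HC b) (ex_ind2 P HV HZ HS HR HC s)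
  | Call f args => HC f args (ex_ind2 P HV HZ HS HR HC f)
      ((fix go (l : list ex) : Forall P l :=
         match l with
         | [] => Forall_nil _
         | x :: l' => Forall_cons _ (ex_ind2 P HV HZ HS HR HC x) (go l')
         end) args)
  end.

Theorem rep_den : forall e a, Rep a (den e).
Proof.
  induction e using ex_ind2; intros a; simpl.
  - apply rep_var.
  - apply rep_zero.
  - apply rep_suc. auto.
  - apply (rep_rec a (den e1) (den e2) (den e3)); auto.
  - assert (Forall (fun f => Rep a f) (map (fun a e => den a e) args)).
    { apply Forall_map. eapply Forall_impl; [|exact H]. intros x Hx. simpl. apply Hx. }
    pose proof (rep_call a (den e) _ H0 (IHe _)). eapply rep_ext. apply H1.
    intros v _. simpl. rewrite map_map. reflexivity.
Qed.

Fixpoint cst (n : nat) : ex := match n with 0 => Zero | S n => Suc (cst n) end.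
Definition Pred e := Rec e Zero (Var 0).
Definition Add x y := Rec x y (Suc (Var 1)).
Definition Sub x y := Rec y x (Pred (Var 1)).
Definition Mul x y := Call (Rec (Var 0) Zero (Add (Var 3) (Var 1))) [x; y].
Definition Ifz c a b := Call (Rec (Var 0) (Var 1) (Var 4)) [c; a; b].
Definition Eq x y := Ifz (Add (Sub x y) (Sub y x)) (cst 1) Zero.
Definition Le x y := Ifz (Sub x y) (cst 1) Zero.
Definition Lt x y := Le (Suc x) y.
Definition And x y := Ifz x Zero (Ifz y Zero (cst 1)).
Definition Sgn x := Ifz x Zero (cst 1).

Definition b2n (b : bool) : nat := if b then 1 else 0.
Definition ifz (c a b : nat) : nat := match c with 0 => a | _ => b end.

Lemma den_cst n env : den (cst n) env = n.
Proof. induction n; simpl; auto. Qed.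
Lemma den_pred e env : den (Pred e) env = pred (den e env).
Proof. simpl. destruct (den e env); auto. Qed.
Lemma den_add x y env : den (Add x y) env = den x env + den y env.
Proof. simpl. induction (den x env); simpl; auto. Qed.
Lemma den_sub x y env : den (Sub x y) env = den x env - den y env.
Proof. unfold Sub. cbn [den]. generalize (den y env) as n. induction n; cbn [nat_rect]; try lia.
  rewrite den_pred. cbn [den nth]. rewrite IHn. lia. Qed.
Lemma den_mul x y env : den (Mul x y) env = den x env * den y env.
Proof. unfold Mul. cbn [den map nth].
  assert (forall m N Y, nat_rect (fun _ => nat) 0 (fun i r => den (Add (Var 3) (Var 1)) [i; r; N; Y]) m = m * Y).
  { induction m; intros; cbn [nat_rect]; auto. rewrite den_add. cbn [den nth]. rewrite IHm. lia. }
  apply H. Qed.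
Lemma den_ifz c a b env : den (Ifz c a b) env = ifz (den c env) (den a env) (den b env).
Proof. unfold Ifz. cbn [den map nth]. destruct (den c env); reflexivity. Qed.
Lemma den_eq x y env : den (Eq x y) env = b2n (den x env =? den y env).
Proof. unfold Eq. rewrite den_ifz, den_add, !den_sub, !den_cst. simpl.
  destruct (Nat.eqb_spec (den x env) (den y env)).
  - rewrite e, Nat.sub_diag. reflexivity.
  - destruct (den x env - den y env + (den y env - den x env)) eqn:E; [lia|reflexivity]. Qed.
Lemma den_le x y env : den (Le x y) env = b2n (den x env <=? den y env).
Proof. unfold Le. rewrite den_ifz, den_sub, !den_cst. simpl.
  destruct (Nat.leb_spec (den x env) (den y env)).
  - replace (den x env - den y env) with 0 by lia. reflexivity.
  - destruct (den x env - den y env) eqn:E; [lia|reflexivity]. Qed.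
Lemma den_lt x y env : den (Lt x y) env = b2n (den x env <? den y env).
Proof. unfold Lt. rewrite den_le. reflexivity. Qed.
Lemma den_and x y env : den (And x y) env = b2n (negb (den x env =? 0) && negb (den y env =? 0)).
Proof. unfold And. rewrite !den_ifz, !den_cst. simpl.
  destruct (den x env); simpl; auto. destruct (den y env); simpl; auto. Qed.
Lemma den_sgn x env : den (Sgn x) env = b2n (negb (den x env =? 0)).
Proof. unfold Sgn. rewrite den_ifz, den_cst. simpl. destruct (den x env); auto. Qed.

Global Opaque Pred Add Sub Mul Ifz Eq Le Lt And Sgn.
Hint Rewrite den_cst den_pred den_add den_sub den_mul den_ifz den_eq den_le den_lt den_and den_sgn : dens.

Fixpoint allpos (l : list ex) : ex := match l with [] => cst 1 | e :: l => Ifz e Zero (allpos l) end.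
Definition vars k n := map Var (seq k n).
Definition muStep := Ifz (Var 0) (cst 1) (Ifz (Pred (Var 0)) (Suc (Suc (Var 1))) Zero).
Definition muFin := Ifz (Var 0) Zero (Ifz (Pred (Var 0)) Zero (Pred (Var 0))).

Fixpoint compile (c : rcode) (a : nat) {struct c} : ex :=
  match c with
  | RZero => cst 1
  | RSucc => match a with 0 => Zero | S _ => Suc (Suc (Var 1)) end
  | RProj i => if i <? a then Suc (Var (S i)) else Zero
  | RComp f gs => Ifz (allpos (map (fun g => compile g a) gs)) Zero
                    (Call (compile f (length gs)) (Var 0 :: map (fun g => Pred (compile g a)) gs))
  | RPrec f g => match a with 0 => Zero | S a' =>
        Rec (Var 1) (Call (compile f a') (Var 0 :: vars 2 a'))
            (Ifz (Var 1) Zero (Call (compile g (S (S a'))) (Var 2 :: Var 0 :: Pred (Var 1) :: vars 4 a'))) end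
  | RMu f => Call muFin [Rec (Suc (Var 0)) Zero
                 (Ifz (Var 1) (Call muStep [Call (compile f (S a)) (Var 2 :: Var 0 :: vars 3 a); Var 0]) (Var 1))]
  end.

Lemma den_vars pre w rest : map (fun e => den e (pre ++ w ++ rest)) (vars (length pre) (length w)) = w.
Proof.
  unfold vars. rewrite map_map. cbn [den].
  revert pre. induction w as [|x w IH]; intros pre; simpl; auto.
  rewrite app_nth2 by lia. rewrite Nat.sub_diag. simpl. f_equal.
  specialize (IH (pre ++ [x])). rewrite <- app_assoc in IH. simpl in IH.
  rewrite length_app in IH. simpl in IH. rewrite Nat.add_1_r in IH. exact IH.
Qed.

Lemma den_vars' pre w : map (fun e => den e (pre ++ w)) (vars (length pre) (length w)) = w.
Proof. pose proof (den_vars pre w []). rewrite app_nil_r in H. exact H. Qed.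

Lemma allpos_ok l env : den (allpos l) env <> 0 <-> Forall (fun e => den e env <> 0) l.
Proof.
  induction l; simpl.
  - split; auto.
  - rewrite den_ifz. split.
    + destruct (den a env) eqn:E; simpl. intros H; congruence. intros H. constructor. lia. apply IHl; auto.
    + intros H. inversion H; subst. destruct (den a env); simpl; [congruence|]. apply IHl; auto.
Qed.

Fixpoint rcode_ind2 (P : rcode -> Prop)
  (H0 : P RZero) (H1 : P RSucc) (H2 : forall i, P (RProj i))
  (H3 : forall f gs, P f -> Forall P gs -> P (RComp f gs))
  (H4 : forall f g, P f -> P g -> P (RPrec f g))
  (H5 : forall f, P f -> P (RMu f)) (c : rcode) : P c :=
  match c with
  | RZero => H0 | RSucc => H1 | RProj i => H2 i
  | RComp f gs => H3 f gs (rcode_ind2 P H0 H1 H2 H3 H4 H5 f)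
      ((fix go (l : list rcode) : Forall P l :=
         match l with
         | [] => Forall_nil _
         | x :: l' => Forall_cons _ (rcode_ind2 P H0 H1 H2 H3 H4 H5 x) (go l')
         end) gs)
  | RPrec f g => H4 f g (rcode_ind2 P H0 H1 H2 H3 H4 H5 f) (rcode_ind2 P H0 H1 H2 H3 H4 H5 g)
  | RMu f => H5 f (rcode_ind2 P H0 H1 H2 H3 H4 H5 f)
  end.

Definition precv (F : nat -> nat) (G : nat -> nat -> nat) (n : nat) : nat :=
  nat_rect (fun _ => nat) (F 0) (fun i r => ifz r 0 (G i (pred r))) n.

Lemma nat_rect_ext (b1 b2 : nat) (s1 s2 : nat -> nat -> nat) n :
  b1 = b2 -> (forall i r, s1 i r = s2 i r) ->
  nat_rect (fun _ => nat) b1 s1 n = nat_rect (fun _ => nat) b2 s2 n.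
Proof. intros -> H. induction n; simpl; auto. rewrite IHn. auto. Qed.

Lemma den_prec f g a' t n w : length w = a' ->
  den (compile (RPrec f g) (S a')) (t :: n :: w) =
  nat_rect (fun _ => nat) (den (compile f a') (t :: w))
     (fun i r => ifz r 0 (den (compile g (S (S a'))) (t :: i :: pred r :: w))) n.
Proof.
  intros Hw. cbn [compile den].
  apply nat_rect_ext.
  - cbn [map den nth]. f_equal. f_equal. subst a'. apply (den_vars' [t; n] w).
  - intros i r. rewrite den_ifz. cbn [den nth]. f_equal. cbn [map den nth].
    rewrite den_pred. cbn [den nth]. do 4 f_equal. subst a'. apply (den_vars' [i; r; t; n] w).
Qed.

Definition mustate (F : nat -> nat) (N : nat) : nat :=
  nat_rect (fun _ => nat) 0 (fun j st => ifz st (ifz (F j) 1 (ifz (pred (F j)) (S (S j)) 0)) st) N.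

Lemma den_mu f a t v : length v = a ->
  den (compile (RMu f) a) (t :: v) =
  (fun s => ifz s 0 (ifz (pred s) 0 (pred s)))
    (mustate (fun j => den (compile f (S a)) (t :: j :: v)) (S t)).
Proof.
  intros Hv. cbn [compile].
  set (R := Rec _ _ _).
  assert (E : den R (t :: v) = mustate (fun j => den (compile f (S a)) (t :: j :: v)) (S t)).
  { unfold R. cbn [den nth]. unfold mustate. apply nat_rect_ext; auto. intros j st.
    rewrite den_ifz. cbn [den nth]. f_equal. unfold muStep. rewrite !den_ifz, den_pred, den_cst. cbn [den nth map].
    replace (map (fun e => den e (j :: st :: t :: v)) (vars 3 a)) with v by (subst a; symmetry; apply (den_vars' [j; st; t] v)).
    reflexivity. }
  unfold muFin. cbn [den map]. rewrite !den_ifz, !den_pred. cbn [den nth]. rewrite E. reflexivity.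
Qed.

Lemma den_comp f gs a t v :
  den (compile (RComp f gs) a) (t :: v) =
  ifz (den (allpos (map (fun g => compile g a) gs)) (t :: v)) 0
      (den (compile f (length gs)) (t :: map (fun g => pred (den (compile g a) (t :: v))) gs)).
Proof.
  cbn [compile]. rewrite den_ifz. f_equal. cbn [den map nth]. rewrite map_map.
  f_equal. f_equal. apply map_ext. intros g. apply den_pred.
Qed.

Lemma ms0 F N : mustate F N = 0 -> forall j, j < N -> F j >= 2.
Proof.
  induction N; intros H j Hj; [lia|]. unfold mustate in H; cbn [nat_rect] in H; fold (mustate F N) in H.
  destruct (mustate F N) eqn:E; [|simpl in H; lia].
  simpl in H. destruct (F N) eqn:EF; simpl in H; [lia|]. destruct n; simpl in H; [lia|].
  assert (j < N \/ j = N) as [|] by lia; auto. subst. rewrite EF. lia.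
Qed.

Lemma msS F N y : mustate F N = S (S y) -> y < N /\ F y = 1 /\ forall j, j < y -> F j >= 2.
Proof.
  induction N; intros H. simpl in H; lia.
  unfold mustate in H; cbn [nat_rect] in H; fold (mustate F N) in H.
  destruct (mustate F N) eqn:E.
  - simpl in H. destruct (F N) eqn:EF; simpl in H; [lia|]. destruct n; simpl in H; [|lia].
    inversion H; subst. split; [lia|]. split; auto. intros j Hj. apply (ms0 F y E). lia.
  - simpl in H. subst. destruct IHN as [? [? ?]]; auto.
Qed.

Lemma ms_le F y : (forall j, j < y -> F j >= 2) -> forall N, N <= y -> mustate F N = 0.
Proof.
  intros H N. induction N; intros HN; auto. unfold mustate; cbn [nat_rect]; fold (mustate F N).
  rewrite IHN by lia. simpl. specialize (H N ltac:(lia)). destruct (F N); [lia|]. destruct n; [lia|]. reflexivity.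
Qed.

Lemma ms_found F y : (forall j, j < y -> F j >= 2) -> F y = 1 -> forall N, y < N -> mustate F N = S (S y).
Proof.
  intros H Hy N. induction N; intros HN; [lia|]. unfold mustate; cbn [nat_rect]; fold (mustate F N).
  assert (y = N \/ y < N) as [<-|] by lia.
  - rewrite (ms_le F y H y) by lia. simpl. rewrite Hy. reflexivity.
  - rewrite IHN by auto. reflexivity.
Qed.

Lemma revals_of gs a t v :
  Forall (fun g => forall a t v y, length v = a -> den (compile g a) (t :: v) = S y -> reval g v y) gs ->
  length v = a ->
  Forall (fun e => den e (t :: v) <> 0) (map (fun g => compile g a) gs) ->
  revals gs v (map (fun g => pred (den (compile g a) (t :: v))) gs).
Proof.
  induction 1 as [|x l Hx Hl IH]; intros Hv Hp; simpl; constructor.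
  - simpl in Hp. apply Forall_cons_iff in Hp as [Hh Ht]. apply (Hx a t); auto. destruct (den (compile x a) (t :: v)); simpl; [congruence|]; auto.
  - simpl in Hp. apply Forall_cons_iff in Hp as [Hh Ht]. apply IH; auto.
Qed.

Lemma sound : forall c a t v y, length v = a -> den (compile c a) (t :: v) = S y -> reval c v y.
Proof.
  induction c as [| |i|f gs IHc HF|c1 c2 IHc1 IHc2|c IHc] using rcode_ind2; intros a t v y Hv H.
  - cbn [compile] in H. rewrite den_cst in H. inversion H. constructor.
  - destruct a; cbn [compile den] in H; [discriminate|]. destruct v as [|x w]; simpl in Hv; [lia|].
    cbn [nth] in H. inversion H. constructor.
  - cbn [compile] in H. destruct (Nat.ltb_spec i a); cbn [den] in H; [|discriminate].
    inversion H. cbn [nth]. constructor. lia.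
  - rewrite den_comp in H. destruct (den (allpos (map (fun g => compile g a) gs)) (t :: v)) eqn:E; simpl in H; [discriminate|].
    assert (Hp : den (allpos (map (fun g => compile g a) gs)) (t :: v) <> 0) by lia.
    apply allpos_ok in Hp.
    econstructor. apply (revals_of gs a t v HF Hv Hp).
    apply (IHc (length gs) t); auto. rewrite length_map. auto.
  - destruct a as [|a']; [cbn [compile den] in H; discriminate|].
    destruct v as [|n w]; simpl in Hv; [lia|]. injection Hv as Hv.
    rewrite den_prec in H by auto. revert y H. induction n; intros y H.
    + cbn [nat_rect] in H. constructor. apply (IHc1 a' t); auto.
    + cbn [nat_rect] in H. destruct (nat_rect _ _ _ n) eqn:E; simpl in H; [discriminate|].
      econstructor. apply (IHn _ eq_refl). apply (IHc2 (S (S a')) t); simpl; auto.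
  - rewrite den_mu in H by auto. cbv beta in H.
    destruct (mustate _ (S t)) as [|[|s]] eqn:E; simpl in H; try discriminate.
    inversion H; subst s. apply msS in E. destruct E as [_ [E1 E2]].
    constructor.
    + apply (IHc (S a) t); simpl; auto.
    + intros m Hm. specialize (E2 m Hm). destruct (den (compile c (S a)) (t :: m :: v)) as [|[|k]] eqn:E3; try lia.
      exists k. apply (IHc (S a) t); simpl; auto.
Qed.

Lemma unif_bound (P : nat -> nat -> Prop) n :
  (forall m, m < n -> exists t0, forall t, t0 <= t -> P m t) ->
  exists T, forall m, m < n -> forall t, T <= t -> P m t.
Proof.
  induction n; intros H. exists 0. intros; lia.
  destruct IHn as [T1 HT1]. intros m Hm. apply H. lia.
  destruct (H n ltac:(lia)) as [T2 HT2]. exists (max T1 T2). intros m Hm t Ht.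
  assert (m < n \/ m = n) as [|] by lia. apply HT1; lia. subst. apply HT2. lia.
Qed.

Lemma revals_len gs v ys : revals gs v ys -> length gs = length ys.
Proof. induction 1; simpl; auto. Qed.

Lemma allpos_F2 gs ys a t v : Forall2 (fun g y => den (compile g a) (t :: v) = S y) gs ys ->
  den (allpos (map (fun g => compile g a) gs)) (t :: v) <> 0 /\
  map (fun g => pred (den (compile g a) (t :: v))) gs = ys.
Proof.
  induction 1; simpl. split; auto.
  rewrite den_ifz, H. simpl. destruct IHForall2. split; auto. congruence.
Qed.

Lemma compl : forall c v y, reval c v y -> forall a, length v = a ->
  exists t0, forall t, t0 <= t -> den (compile c a) (t :: v) = S y
with compls : forall gs v ys, revals gs v ys -> forall a, length v = a ->
  exists t0, forall t, t0 <= t -> Forall2 (fun g y => den (compile g a) (t :: v) = S y) gs ys.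
Proof.
  - intros c v y H. destruct H as [v|x v|i v Hi|f gs v ys y Hs Hf|f g v y Hf|f g n v r y H1 H2|f v n H0 Hlt];
      intros a Ha.
    + exists 0. intros. cbn [compile]. rewrite den_cst. reflexivity.
    + exists 0. intros. destruct a; simpl in Ha; [lia|]. reflexivity.
    + exists 0. intros. cbn [compile]. destruct (Nat.ltb_spec i a); [|lia]. reflexivity.
    + destruct (compls _ _ _ Hs a Ha) as [t1 Ht1].
      destruct (compl _ _ _ Hf (length gs)) as [t2 Ht2]. rewrite (revals_len _ _ _ Hs). reflexivity.
      exists (max t1 t2). intros t Ht. rewrite den_comp.
      destruct (allpos_F2 _ _ _ _ _ (Ht1 t ltac:(lia))) as [A B].
      destruct (den (allpos _) _); [congruence|]. simpl. rewrite B. apply Ht2. lia.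
    + destruct a as [|a']; [simpl in Ha; lia|]. injection Ha as Ha.
      destruct (compl _ _ _ Hf a' Ha) as [t1 Ht1]. exists t1. intros t Ht.
      rewrite den_prec by auto. cbn [nat_rect]. apply Ht1. auto.
    + destruct a as [|a']; [simpl in Ha; lia|]. injection Ha as Ha.
      destruct (compl _ _ _ H1 (S a') ltac:(simpl; lia)) as [t1 Ht1].
      destruct (compl _ _ _ H2 (S (S a')) ltac:(simpl; lia)) as [t2 Ht2].
      exists (max t1 t2). intros t Ht.
      rewrite den_prec by auto. cbn [nat_rect]. specialize (Ht1 t ltac:(lia)). rewrite den_prec in Ht1 by auto.
      rewrite Ht1. simpl. apply Ht2. lia.
    + destruct (compl _ _ _ H0 (S a) ltac:(simpl; lia)) as [t1 Ht1].
      destruct (unif_bound (fun m t => den (compile f (S a)) (t :: m :: v) >= 2) n) as [T HT].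
      { intros m Hm. destruct (Hlt m Hm) as [k Hk].
        destruct (compl _ _ _ Hk (S a) ltac:(simpl; lia)) as [tm Htm].
        exists tm. intros t Ht. rewrite Htm by auto. lia. }
      exists (max n (max t1 T)). intros t Ht. rewrite den_mu by auto. cbv beta.
      rewrite (ms_found _ n); auto; try lia.
      intros j Hj. apply HT; auto. lia. apply Ht1. lia.
  - intros gs v ys H. destruct H as [v|g gs v y ys Hg Hgs]; intros a Ha.
    + exists 0. intros. constructor.
    + destruct (compl _ _ _ Hg a Ha) as [t1 Ht1]. destruct (compls _ _ _ Hgs a Ha) as [t2 Ht2].
      exists (max t1 t2). intros t Ht. constructor. apply Ht1; lia. apply Ht2; lia.
Qed.

Definition tri (s : nat) : nat := nat_rect (fun _ => nat) 0 (fun i r => r + S i) s.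

Lemma tri_S s : tri (S s) = tri s + S s.
Proof. reflexivity. Qed.

Lemma tri_double s : 2 * tri s = s * (s + 1).
Proof. induction s; auto. rewrite tri_S. nia. Qed.

Lemma cpair_tri x y : cpair x y = tri (x + y) + y.
Proof.
  unfold cpair. f_equal. rewrite <- tri_double.
  rewrite Nat.mul_comm. apply Nat.div_mul. lia.
Qed.

Lemma tri_mono a b : a <= b -> tri a <= tri b.
Proof. induction 1; auto. rewrite tri_S. lia. Qed.

Lemma tri_ge s : s <= tri s.
Proof. induction s; auto. rewrite tri_S. lia. Qed.

Definition scount (m : nat) : nat := nat_rect (fun _ => nat) 0 (fun i r => r + b2n (tri (S i) <=? m)) m.
Definition fstc m := scount m - (m - tri (scount m)).
Definition sndc m := m - tri (scount m).

Lemma count_min m s N : tri s <= m < tri (S s) ->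
  nat_rect (fun _ => nat) 0 (fun i r => r + b2n (tri (S i) <=? m)) N = min N s.
Proof.
  intros Hs. induction N; auto. cbn [nat_rect]. rewrite IHN.
  destruct (Nat.leb_spec (tri (S N)) m); unfold b2n.
  - assert (S N <= s). { destruct (le_lt_dec (S N) s); auto. pose proof (tri_mono (S s) (S N)). lia. }
    lia.
  - assert (s <= N). { destruct (le_lt_dec s N); auto. pose proof (tri_mono (S N) s). lia. }
    lia.
Qed.

Lemma scount_spec m s : tri s <= m < tri (S s) -> scount m = s.
Proof. intros H. unfold scount. rewrite (count_min m s) by auto. pose proof (tri_ge s). lia. Qed.

Lemma unpair_cpair x y : fstc (cpair x y) = x /\ sndc (cpair x y) = y.
Proof.
  rewrite cpair_tri. assert (scount (tri (x + y) + y) = x + y).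
  { apply scount_spec. rewrite tri_S. lia. }
  unfold fstc, sndc. rewrite H. lia.
Qed.

Lemma cpair_surj m : exists x y, cpair x y = m.
Proof.
  assert (exists s, tri s <= m < tri (S s)) as [s Hs].
  { induction m. exists 0. simpl. lia.
    destruct IHm as [s Hs]. destruct (Nat.eq_dec (S m) (tri (S s))).
    - exists (S s). rewrite (tri_S (S s)). lia.
    - exists s. lia. }
  exists (s - (m - tri s)), (m - tri s). rewrite cpair_tri. rewrite tri_S in Hs.
  replace (s - (m - tri s) + (m - tri s)) with s by lia. lia.
Qed.

Lemma cpair_ge_r x y : y <= cpair x y.
Proof. rewrite cpair_tri. lia. Qed.
Lemma cpair_ge_l x y : x <= cpair x y.
Proof. rewrite cpair_tri. pose proof (tri_ge (x + y)). lia. Qed.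

Lemma cpair_inj x y x' y' : cpair x y = cpair x' y' -> x = x' /\ y = y'.
Proof.
  intros H. destruct (unpair_cpair x y), (unpair_cpair x' y'). rewrite H in *. split; congruence.
Qed.

Lemma code_inj l1 l2 : code_list l1 = code_list l2 -> l1 = l2.
Proof.
  revert l2; induction l1; intros [|b l2]; simpl; intros H; try discriminate; auto.
  injection H as H. apply cpair_inj in H as [-> H]. f_equal. auto.
Qed.

Lemma code_surj m : exists l, code_list l = m.
Proof.
  induction m as [m IH] using (well_founded_induction lt_wf).
  destruct m. exists []. reflexivity.
  destruct (cpair_surj m) as [x [y <-]].
  destruct (IH y) as [l Hl]. pose proof (cpair_ge_r x y). lia.
  exists (x :: l). simpl. rewrite Hl. reflexivity.
Qed.

Lemma length_code l : length l <= code_list l.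
Proof. induction l; simpl; auto. pose proof (cpair_ge_r a (code_list l)). lia. Qed.

Definition hdc m := fstc (pred m).
Definition tlc m := sndc (pred m).
Lemma hdc_cons x l : hdc (code_list (x :: l)) = x.
Proof. apply unpair_cpair. Qed.
Lemma tlc_cons x l : tlc (code_list (x :: l)) = code_list l.
Proof. apply unpair_cpair. Qed.
Lemma tlc_nil : tlc 0 = 0.
Proof. reflexivity. Qed.
Lemma code_nil_iff l : code_list l = 0 <-> l = [].
Proof. destruct l; simpl; split; congruence. Qed.

Definition TriB := Rec (Var 0) Zero (Add (Var 1) (Suc (Var 0))).
Definition Tri e := Call TriB [e].
Definition Cons x l := Suc (Add (Tri (Add x l)) l).
Definition SB := Rec (Var 0) Zero (Add (Var 1) (Le (Tri (Suc (Var 0))) (Var 2))).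
Definition FstB := Sub (Call SB [Var 0]) (Sub (Var 0) (Tri (Call SB [Var 0]))).
Definition SndB := Sub (Var 0) (Tri (Call SB [Var 0])).
Definition Hd e := Call FstB [Pred e].
Definition Tl e := Call SndB [Pred e].

Lemma den_tri e env : den (Tri e) env = tri (den e env).
Proof. unfold Tri, TriB. cbn [den map nth]. unfold tri. apply nat_rect_ext; auto.
  intros. rewrite den_add. reflexivity. Qed.
Lemma den_cons x l env : den (Cons x l) env = S (cpair (den x env) (den l env)).
Proof. unfold Cons. cbn [den]. rewrite den_add, den_tri, den_add, cpair_tri. reflexivity. Qed.
Lemma den_SB m : den SB [m] = scount m.
Proof. unfold SB. cbn [den nth]. unfold scount. apply nat_rect_ext; auto.
  intros. rewrite den_add, den_le, den_tri. reflexivity. Qed.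
Lemma den_hd e env : den (Hd e) env = hdc (den e env).
Proof. unfold Hd, FstB. cbn [den map]. rewrite !den_sub, den_tri, den_pred. cbn [den map nth].
  rewrite den_SB. reflexivity. Qed.
Lemma den_tl e env : den (Tl e) env = tlc (den e env).
Proof. unfold Tl, SndB. cbn [den map]. rewrite !den_sub, den_tri, den_pred. cbn [den map nth].
  rewrite den_SB. reflexivity. Qed.
Global Opaque Tri Cons Hd Tl.
Hint Rewrite den_tri den_cons den_hd den_tl : dens.


Definition RestB := Rec (Var 0) (Var 1) (Tl (Var 1)).
Definition Rest i m := Call RestB [i; m].
Definition restc i m := nat_rect (fun _ => nat) m (fun _ r => tlc r) i.
Lemma den_rest i m env : den (Rest i m) env = restc (den i env) (den m env).
Proof. unfold Rest, RestB. cbn [den map nth]. unfold restc. apply nat_rect_ext; auto.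
  intros. rewrite den_tl. reflexivity. Qed.
Lemma tlc_code l : tlc (code_list l) = code_list (tl l).
Proof. destruct l. reflexivity. apply tlc_cons. Qed.
Lemma skipn_S_tl {A} i (L : list A) : skipn (S i) L = tl (skipn i L).
Proof. revert L; induction i; intros [|x L]; simpl; auto. rewrite <- IHi. reflexivity. Qed.
Lemma restc_code i L : restc i (code_list L) = code_list (skipn i L).
Proof.
  induction i; auto. unfold restc in *; cbn [nat_rect]. rewrite IHi, tlc_code, skipn_S_tl. reflexivity.
Qed.

Definition foldbody np st :=
  Rec (Var 0) (Var 1) (Ifz (Rest (Var 0) (Var 2)) (Var 1) (Call st (Var 1 :: Hd (Rest (Var 0) (Var 2)) :: vars 4 np))).
Definition FoldL np st init lst ps := Call (foldbody np st) (lst :: init :: ps).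

Lemma fold_firstn (F : nat -> nat -> nat) (L : list nat) acc N :
  nat_rect (fun _ => nat) acc (fun i r => ifz (code_list (skipn i L)) r (F r (hdc (code_list (skipn i L))))) N
  = fold_left F (firstn N L) acc.
Proof.
  induction N; auto. cbn [nat_rect]. rewrite IHN.
  destruct (le_lt_dec (length L) N).
  - rewrite skipn_all2 by lia. rewrite !firstn_all2 by lia. reflexivity.
  - destruct (skipn N L) as [|x L'] eqn:E.
    + apply skipn_all_iff in E. lia.
    + rewrite hdc_cons. cbn [code_list ifz].
      assert (firstn (S N) L = firstn N L ++ [x]).
      { rewrite <- (firstn_skipn N L) at 1. rewrite E. rewrite firstn_app.
        rewrite firstn_firstn, length_firstn. replace (Nat.min (S N) N) with N by lia.
        replace (S N - Nat.min N (length L)) with 1 by lia. reflexivity. }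
      rewrite H, fold_left_app. reflexivity.
Qed.

Lemma den_fold np st init lst ps env L :
  length ps = np -> den lst env = code_list L ->
  den (FoldL np st init lst ps) env =
  fold_left (fun acc x => den st (acc :: x :: map (fun e => den e env) ps)) L (den init env).
Proof.
  intros Hp HL. unfold FoldL, foldbody. cbn [den map nth]. rewrite HL.
  erewrite nat_rect_ext; [ | reflexivity | ].
  2:{ intros i r. rewrite den_ifz, den_rest. cbn [den map nth]. rewrite den_hd, den_rest. cbn [den nth].
      rewrite restc_code.
      replace (map (fun e => den e (i :: r :: code_list L :: den init env :: map (fun a => den a env) ps)) (vars 4 np))
        with (map (fun e => den e env) ps).
      2:{ symmetry. subst np. rewrite <- (length_map (fun a => den a env) ps).
          apply (den_vars' [i; r; code_list L; den init env]). }
      reflexivity. }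
  rewrite (fold_firstn (fun acc x => den st (acc :: x :: map (fun e => den e env) ps))).
  rewrite firstn_all2. reflexivity. apply length_code.
Qed.
Global Opaque Rest FoldL.

Lemma fold_left_ext {A B} (f g : A -> B -> A) l a : (forall x y, f x y = g x y) -> fold_left f l a = fold_left g l a.
Proof. intros H. revert a; induction l; simpl; intros; auto. rewrite H. auto. Qed.

Lemma fold_S (L : list nat) n : fold_left (fun acc _ => S acc) L n = length L + n.
Proof. revert n; induction L; intros; simpl; auto. rewrite IHL. lia. Qed.

Definition Len e := FoldL 0 (Suc (Var 0)) Zero e [].
Lemma den_len e env L : den e env = code_list L -> den (Len e) env = length L.
Proof.
  intros H. unfold Len. rewrite (den_fold _ _ _ _ _ _ L) by auto. cbn [den nth map].
  rewrite fold_S. lia.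
Qed.

Lemma fold_cons (L A : list nat) : fold_left (fun acc x => S (cpair x acc)) L (code_list A) = code_list (rev L ++ A).
Proof. revert A; induction L; intros A; simpl; auto. change (S (cpair a (code_list A))) with (code_list (a :: A)).
  rewrite IHL. rewrite <- app_assoc. reflexivity. Qed.

Definition Rev e := FoldL 0 (Cons (Var 1) (Var 0)) Zero e [].
Lemma den_rev e env L : den e env = code_list L -> den (Rev e) env = code_list (rev L).
Proof.
  intros H. unfold Rev. rewrite (den_fold _ _ _ _ _ _ L) by auto.
  rewrite (fold_left_ext _ (fun acc x => S (cpair x acc))). 2:{ intros. rewrite den_cons. cbn [den nth]. reflexivity. }
  cbn [den]. change 0 with (code_list []). rewrite fold_cons, app_nil_r. reflexivity.
Qed.


Definition App u v := FoldL 0 (Cons (Var 1) (Var 0)) v (Rev u) [].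
Lemma den_app u v env U V : den u env = code_list U -> den v env = code_list V ->
  den (App u v) env = code_list (U ++ V).
Proof.
  intros HU HV. unfold App. rewrite (den_fold _ _ _ _ _ _ (rev U)).
  2: reflexivity. 2: apply den_rev; auto.
  rewrite (fold_left_ext _ (fun acc x => S (cpair x acc))). 2:{ intros. rewrite den_cons. cbn [den nth]. reflexivity. }
  rewrite HV, fold_cons, rev_involutive. reflexivity.
Qed.

Definition FirstnSt := Ifz (Lt (Len (Var 0)) (Var 2)) (Var 0) (Cons (Var 1) (Var 0)).
Definition Firstn j m := Rev (FoldL 1 FirstnSt Zero m [j]).

Lemma firstn_fold j L P :
  fold_left (fun acc x => den FirstnSt [acc; x; j]) L (code_list (rev (firstn j P))) =
  code_list (rev (firstn j (P ++ L))).
Proof.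
  revert P; induction L as [|x L IH]; intros P. rewrite app_nil_r. reflexivity.
  simpl. unfold FirstnSt. rewrite den_ifz, den_lt. rewrite (den_len _ _ (rev (firstn j P))) by reflexivity.
  cbn [den nth]. rewrite length_rev, length_firstn.
  replace (P ++ x :: L) with ((P ++ [x]) ++ L) by (rewrite <- app_assoc; reflexivity).
  rewrite <- IH. f_equal.
  destruct (Nat.ltb_spec (Nat.min j (length P)) j); simpl.
  - rewrite den_cons. cbn [den nth]. rewrite firstn_app.
    replace (j - length P) with (S (j - length P - 1)) by lia. simpl. rewrite (firstn_all2 (n:=j) P) by lia.
    rewrite firstn_nil, rev_app_distr. reflexivity.
  - rewrite firstn_app. replace (j - length P) with 0 by lia. simpl. rewrite app_nil_r. reflexivity.
Qed.

Lemma den_firstn j m env L : den m env = code_list L -> den (Firstn j m) env = code_list (firstn (den j env) L).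
Proof.
  intros H. unfold Firstn. erewrite den_rev. rewrite rev_involutive. reflexivity.
  rewrite (den_fold _ _ _ _ _ _ L) by auto. cbn [map den].
  pose proof (firstn_fold (den j env) L []) as F. rewrite firstn_nil in F. simpl in F. exact F.
Qed.

Definition AllLt m k := FoldL 1 (And (Var 0) (Lt (Var 1) (Var 2))) (cst 1) m [k].
Lemma den_alllt m k env L : den m env = code_list L ->
  den (AllLt m k) env = b2n (forallb (fun x => x <? den k env) L).
Proof.
  intros H. unfold AllLt. rewrite (den_fold _ _ _ _ _ _ L) by auto. rewrite den_cst. cbn [map].
  assert (forall b, fold_left (fun acc x => den (And (Var 0) (Lt (Var 1) (Var 2))) [acc; x; den k env]) L (b2n b)
     = b2n (b && forallb (fun x => x <? den k env) L)).
  { clear H. induction L; intros b; simpl. destruct b; reflexivity.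
    rewrite den_and, den_lt. cbn [den nth].
    replace (negb (b2n b =? 0) && negb (b2n (a <? den k env) =? 0)) with (b && (a <? den k env)).
    rewrite IHL. f_equal. rewrite andb_assoc. reflexivity. destruct b, (a <? den k env); reflexivity. }
  apply (H0 true).
Qed.

Lemma hdc_code l : hdc (code_list l) = hd 0 l.
Proof. destruct l. reflexivity. apply hdc_cons. Qed.

Definition Nth j m := Hd (Rest j m).
Lemma den_nth j m env L : den m env = code_list L -> den (Nth j m) env = nth (den j env) L 0.
Proof.
  intros H. unfold Nth. rewrite den_hd, den_rest, H, restc_code, hdc_code.
  generalize (den j env). clear H. induction L; intros [|n]; simpl; auto. all: try (rewrite skipn_nil; reflexivity).
Qed.

Fixpoint Tab (l : list nat) (x : ex) : ex :=
  match l with [] => Zero | c :: l' => Ifz x (cst c) (Tab l' (Pred x)) end.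
Lemma den_tab l x env : den (Tab l x) env = nth (den x env) l 0.
Proof.
  revert x; induction l; intros x; simpl. destruct (den x env); reflexivity.
  rewrite den_ifz, den_cst. destruct (den x env) eqn:E; simpl; auto. rewrite IHl, den_pred, E. reflexivity.
Qed.

Definition Bex N body ps := Call (Rec (Var 0) Zero (Ifz (Var 1) (Sgn (Call body (Var 0 :: vars 3 (length ps)))) (cst 1))) (N :: ps).
Lemma den_bex N body ps env :
  den (Bex N body ps) env = b2n (existsb (fun i => negb (den body (i :: map (fun e => den e env) ps) =? 0)) (seq 0 (den N env))).
Proof.
  unfold Bex. cbn [den map nth]. set (pv := map (fun a => den a env) ps).
  assert (forall M n, nat_rect (fun _ => nat) 0 (fun i r => den (Ifz (Var 1) (Sgn (Call body (Var 0 :: vars 3 (length ps)))) (cst 1)) (i :: r :: M :: pv)) n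
    = b2n (existsb (fun i => negb (den body (i :: pv) =? 0)) (seq 0 n))).
  { intros M n. induction n as [|n IH]. reflexivity.
  cbn [nat_rect]. rewrite IH. rewrite seq_S, existsb_app. rewrite den_ifz, den_sgn, den_cst. cbn [den map nth].
  replace (map (fun e => den e (n :: b2n (existsb (fun i => negb (den body (i :: pv) =? 0)) (seq 0 n)) :: M :: pv)) (vars 3 (length ps)))
    with pv.
  2:{ symmetry. replace (length ps) with (length pv) by apply length_map. apply (den_vars' [_; _; _]). }
  destruct (existsb _ (seq 0 n)); simpl; auto. rewrite orb_false_r. reflexivity. }
  apply H.
Qed.
Global Opaque Len Rev App Firstn AllLt Nth Bex.

Definition par (n : nat) : nat := nat_rect (fun _ => nat) 0 (fun _ r => ifz r 1 0) n.
Definition flip (l : nat) : nat := ifz (par l) (S l) (pred l).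
Definition Flip e := Call (Ifz (Call (Rec (Var 0) Zero (Ifz (Var 1) (cst 1) Zero)) [Var 0]) (Suc (Var 0)) (Pred (Var 0))) [e].
Lemma den_flip e env : den (Flip e) env = flip (den e env).
Proof.
  unfold Flip. cbn [den map nth]. rewrite den_ifz, den_pred. cbn [den map nth]. unfold flip. f_equal.
  unfold par. apply nat_rect_ext; auto. intros. rewrite den_ifz, den_cst. reflexivity.
Qed.
Global Opaque Flip.

Inductive nstep (n : nat) (Rc : nat -> Prop) : list nat -> list nat -> Prop :=
| ns_free u v l : l < 2 * n -> nstep n Rc (u ++ v) (u ++ l :: flip l :: v)
| ns_rel u v p : Rc (code_list p) -> nstep n Rc (u ++ v) (u ++ p ++ v).

Definition PP := Ifz (Var 2) (Cons (Var 5) (Cons (Flip (Var 5)) Zero)) (Var 5).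
Definition stepOK2 (n : nat) (BE : ex) :=
  Ifz (Ifz (Var 2) (Lt (Var 5) (cst (2 * n))) (Sgn (Call BE [Var 6; PP]))) Zero
   (Ifz (Var 1)
      (Ifz (Eq (Var 0) (App (Var 3) (Var 4))) Zero (Suc (App (Var 3) (App PP (Var 4)))))
      (Ifz (Eq (Var 0) (App (Var 3) (App PP (Var 4)))) Zero (Suc (App (Var 3) (Var 4))))).
Definition stepE n BE := Ifz (Var 0) Zero
   (Call (stepOK2 n BE) [Pred (Var 0); Nth (cst 0) (Var 1); Nth (cst 1) (Var 1); Nth (cst 2) (Var 1);
                         Nth (cst 3) (Var 1); Nth (cst 4) (Var 1); Nth (cst 5) (Var 1)]).
Definition Check n BE := Eq (FoldL 0 (stepE n BE) (Suc (Var 0)) (Var 1) []) (cst 1).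

Definition BEok (BE : ex) (Rc : nat -> Prop) := forall m, (exists t, den BE [t; m] <> 0) <-> Rc m.

Lemma b2n_eq a b : b2n (a =? b) = 0 <-> a <> b.
Proof. destruct (Nat.eqb_spec a b); simpl; split; congruence. Qed.

Lemma stepOK2_sound n BE Rc W dir kind u v q t w' : BEok BE Rc ->
  den (stepOK2 n BE) [code_list W; dir; kind; u; v; q; t] = S w' ->
  exists W', w' = code_list W' /\ (nstep n Rc W W' \/ nstep n Rc W' W).
Proof.
  intros HBE H. unfold stepOK2 in H.
  destruct (code_surj u) as [U <-]. destruct (code_surj v) as [V <-].
  assert (HP : exists P, den PP [code_list W; dir; kind; code_list U; code_list V; q; t] = code_list P /\
     (den (Ifz (Var 2) (Lt (Var 5) (cst (2 * n))) (Sgn (Call BE [Var 6; PP]))) [code_list W; dir; kind; code_list U; code_list V; q; t] <> 0 ->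
      ((kind = 0 /\ q < 2 * n /\ P = [q; flip q]) \/ Rc (code_list P)))).
  { unfold PP. destruct kind as [|kind].
    - exists [q; flip q]. rewrite !den_ifz. cbn [den nth ifz]. rewrite !den_cons, den_flip. cbn [den nth].
      split; auto. rewrite den_lt, den_cst. intros Hl. left. split; [reflexivity|]. split; [|reflexivity]. change (b2n (q <? 2 * n) <> 0) in Hl. destruct (Nat.ltb_spec q (2 * n)); auto. exfalso. apply Hl. reflexivity.
    - destruct (code_surj q) as [P <-]. exists P. rewrite !den_ifz. cbn [den nth ifz]. split; auto.
      rewrite den_sgn. cbn [den map nth]. rewrite den_ifz. cbn [den nth ifz]. intros Hs. right.
      apply HBE. exists t. destruct (den BE _); simpl in Hs; auto. }
  destruct HP as [P [HP1 HP2]].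
  rewrite den_ifz in H. destruct (den (Ifz (Var 2) _ _) _) eqn:Ev; [simpl in H; discriminate|].
  specialize (HP2 ltac:(lia)). cbn [ifz] in H.
  assert (Hst : nstep n Rc (U ++ V) (U ++ P ++ V)).
  { destruct HP2 as [[_ [Hq ->]]|HR]. apply ns_free; auto. apply ns_rel; auto. }
  rewrite den_ifz in H. cbn [den nth] in H.
  rewrite !den_ifz, !den_eq in H. cbn [den nth] in H.
  rewrite (den_app _ _ _ U V) in H by reflexivity.
  rewrite (den_app _ _ _ U (P ++ V)) in H. 2: reflexivity. 2: apply den_app; auto.
  destruct dir; cbn [ifz] in H.
  - destruct (Nat.eqb_spec (code_list W) (code_list (U ++ V))); simpl in H; [|discriminate].
    apply code_inj in e. subst W. injection H as <-. exists (U ++ P ++ V). auto.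
  - destruct (Nat.eqb_spec (code_list W) (code_list (U ++ P ++ V))); simpl in H; [|discriminate].
    apply code_inj in e. subst W. injection H as <-. exists (U ++ V). auto.
Qed.

Lemma den_stepE n BE acc R :
  den (stepE n BE) [acc; code_list R] =
  ifz acc 0 (den (stepOK2 n BE) [pred acc; nth 0 R 0; nth 1 R 0; nth 2 R 0; nth 3 R 0; nth 4 R 0; nth 5 R 0]).
Proof.
  unfold stepE. rewrite den_ifz. cbn [den nth]. f_equal. cbn [den map].
  rewrite den_pred. rewrite !(den_nth _ _ _ R) by reflexivity. rewrite !den_cst. reflexivity.
Qed.

Lemma fold_stepE_0 n BE L : fold_left (fun acc x => den (stepE n BE) [acc; x]) L 0 = 0.
Proof.
  induction L; simpl; auto; try (unfold stepE; rewrite den_ifz; cbn [den nth ifz]; auto).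
Qed.

Lemma fold_sound n BE Rc : BEok BE Rc -> forall L W,
  fold_left (fun acc x => den (stepE n BE) [acc; x]) L (S (code_list W)) = 1 ->
  clos_refl_sym_trans_1n _ (nstep n Rc) W [].
Proof.
  intros HBE. induction L as [|r L IH]; intros W H.
  - simpl in H. injection H as H. apply code_nil_iff in H. subst. constructor.
  - simpl in H. destruct (code_surj r) as [R <-]. rewrite den_stepE in H. cbn [ifz pred] in H.
    destruct (den (stepOK2 n BE) _) as [|w'] eqn:E.
    + rewrite fold_stepE_0 in H. discriminate.
    + destruct (stepOK2_sound _ _ _ _ _ _ _ _ _ _ _ HBE E) as [W' [-> Hs]].
      econstructor. exact Hs. apply IH. exact H.
Qed.

Lemma record_exists n BE Rc W Y : BEok BE Rc -> nstep n Rc W Y \/ nstep n Rc Y W ->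
  exists r, den (stepE n BE) [S (code_list W); r] = S (code_list Y).
Proof.
  intros HBE Hs.
  assert (Hpp : forall kind U V q t P, (kind = 0 /\ P = [q; flip q]) \/ (kind <> 0 /\ q = code_list P) ->
     forall w dir, den PP [w; dir; kind; code_list U; code_list V; q; t] = code_list P).
  { intros kind U V q t P HP w dir. unfold PP. rewrite den_ifz. cbn [den nth].
    destruct HP as [[-> ->]|[Hk ->]]. cbn [ifz]. rewrite !den_cons, den_flip. reflexivity.
    destruct kind; [lia|]. reflexivity. }
  assert (Hval : forall kind U V q t P w dir, (kind = 0 /\ P = [q; flip q] /\ q < 2 * n) \/
      (kind <> 0 /\ q = code_list P /\ den BE [t; code_list P] <> 0) ->
     den (Ifz (Var 2) (Lt (Var 5) (cst (2 * n))) (Sgn (Call BE [Var 6; PP]))) [w; dir; kind; code_list U; code_list V; q; t] <> 0).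
  { intros kind U V q t P w dir HP. rewrite den_ifz. cbn [den nth].
    destruct HP as [[-> [-> Hq]]|[Hk [-> Hb]]].
    - cbn [ifz]. rewrite den_lt, den_cst. cbn [den nth]. apply Nat.ltb_lt in Hq. rewrite Hq. simpl. lia.
    - destruct kind; [lia|]. cbn [ifz]. rewrite den_sgn. cbn [den map nth].
      rewrite (Hpp (S kind) U V (code_list P) t P) by (right; split; auto).
      destruct (den BE _); simpl; auto. }
  assert (Hmain : forall dir kind U V q t P, (kind = 0 /\ P = [q; flip q] /\ q < 2 * n) \/
      (kind <> 0 /\ q = code_list P /\ den BE [t; code_list P] <> 0) ->
      (dir = 0 /\ W = U ++ V /\ Y = U ++ P ++ V) \/ (dir = 1 /\ W = U ++ P ++ V /\ Y = U ++ V) ->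
      den (stepE n BE) [S (code_list W); code_list [dir; kind; code_list U; code_list V; q; t]] = S (code_list Y)).
  { intros dir kind U V q t P HP HD. rewrite den_stepE. cbn [ifz pred nth].
    unfold stepOK2. rewrite den_ifz.
    destruct (den (Ifz (Var 2) _ _) _) eqn:E. { exfalso. eapply Hval. exact HP. exact E. }
    cbn [ifz]. rewrite !den_ifz, !den_eq. cbn [den nth].
    assert (HP' : (kind = 0 /\ P = [q; flip q]) \/ (kind <> 0 /\ q = code_list P)) by (destruct HP as [[? [? ?]]|[? [? ?]]]; auto).
    rewrite (den_app _ _ _ U V) by reflexivity.
    rewrite (den_app _ _ _ U (P ++ V)). 2: reflexivity. 2: apply den_app; auto.
    destruct HD as [[-> [-> ->]]|[-> [-> ->]]]; cbn [ifz].
    - rewrite Nat.eqb_refl. cbn [b2n ifz]. reflexivity.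
    - rewrite Nat.eqb_refl. cbn [b2n ifz]. reflexivity. }
  destruct Hs as [Hs|Hs]; destruct Hs as [u v l Hl|u v p Hp].
  - exists (code_list [0; 0; code_list u; code_list v; l; 0]). apply (Hmain 0 0 u v l 0 [l; flip l]); auto.
  - apply HBE in Hp as [t Ht]. exists (code_list [0; 1; code_list u; code_list v; code_list p; t]).
    apply (Hmain 0 1 u v (code_list p) t p); auto; try (right; auto).
  - exists (code_list [1; 0; code_list u; code_list v; l; 0]). apply (Hmain 1 0 u v l 0 [l; flip l]); auto.
  - apply HBE in Hp as [t Ht]. exists (code_list [1; 1; code_list u; code_list v; code_list p; t]).
    apply (Hmain 1 1 u v (code_list p) t p); auto; try (right; auto).
Qed.

Lemma check_spec n BE Rc W : BEok BE Rc ->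
  ((exists C, den (Check n BE) [code_list W; C] <> 0) <-> clos_refl_sym_trans _ (nstep n Rc) W []).
Proof.
  intros HBE. rewrite clos_rst_rst1n_iff. split.
  - intros [C HC]. destruct (code_surj C) as [L <-]. unfold Check in HC. rewrite den_eq, den_cst in HC.
    rewrite (den_fold _ _ _ _ _ _ L) in HC by reflexivity. cbn [den nth map] in HC.
    destruct (Nat.eqb_spec (fold_left (fun acc x => den (stepE n BE) [acc; x]) L (S (code_list W))) 1) as [E|]; [|simpl in HC; lia].
    eapply fold_sound; eauto.
  - intros H.
    assert (Hx : forall W Z, clos_refl_sym_trans_1n _ (nstep n Rc) W Z -> Z = [] ->
       exists L, fold_left (fun acc x => den (stepE n BE) [acc; x]) L (S (code_list W)) = 1).
    { clear W H. intros W Z H. induction H as [W|W Y Z Hs H IH]; intros HZ. subst. exists []. reflexivity.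
      destruct (IH HZ) as [L HL]. destruct (record_exists n BE Rc W Y HBE Hs) as [r Hr].
      exists (r :: L). cbn [fold_left]. rewrite Hr. exact HL. }
    destruct (Hx W [] H eq_refl) as [L HL].
    exists (code_list L). unfold Check. rewrite den_eq, den_cst.
    rewrite (den_fold _ _ _ _ _ _ L) by reflexivity. cbn [den nth map]. rewrite HL. simpl. lia.
Qed.

Lemma prodG_app (G : group) (l1 l2 : list G) : prodG G (l1 ++ l2) = gmul G (prodG G l1) (prodG G l2).
Proof.
  induction l1; simpl. rewrite gmul1l. reflexivity.
  unfold prodG in *. simpl. rewrite IHl1. apply gassoc.
Qed.

Lemma eval_word_app G gen l1 l2 : eval_word G gen (l1 ++ l2) = gmul G (eval_word G gen l1) (eval_word G gen l2).
Proof. unfold eval_word. rewrite map_app. apply prodG_app. Qed.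

Lemma nodup_ex {T} (l : list T) : exists l', NoDup l' /\ forall x, In x l <-> In x l'.
Proof.
  induction l as [|y l [l' [Hn Hl]]]. exists []. split. constructor. tauto.
  destruct (classic (In y l')).
  - exists l'. split; auto. intros x. simpl. rewrite Hl. split; [intros [<-|]|]; auto.
  - exists (y :: l'). split. constructor; auto. intros x. simpl. rewrite Hl. tauto.
Qed.

Lemma enum_alph (G : group) (S : list G) : exists (k : nat) (a : nat -> G),
    (forall i j, i < k -> j < k -> a i = a j -> i = j) /\ (forall t, alph G S t <-> exists i, i < k /\ a i = t).
Proof.
  destruct (nodup_ex (flat_map (fun h => [h; ginv G h]) S)) as [l [Hn Hl]].
  exists (length l), (fun i => nth i l (gone G)). split.
  - intros i j Hi Hj E. eapply NoDup_nth; eauto.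
  - intros t. unfold alph. split.
    + intros [h [Hh Ht]]. assert (In t l). { apply Hl. apply in_flat_map. exists h. split; auto. simpl. destruct Ht; subst; auto. }
      apply In_nth with (d := gone G) in H as [i [Hi Hi']]. eauto.
    + intros [i [Hi <-]]. apply (nth_In l (gone G)) in Hi. apply Hl in Hi.
      apply in_flat_map in Hi as [h [Hh Ht]]. exists h. simpl in Ht. split; auto. destruct Ht as [|[|[]]]; subst; auto.
Qed.

Lemma tau_ex (G : group) n gen (a : nat -> G) k :
  (forall g : G, exists w, word_over n w /\ eval_word G gen w = g) ->
  exists tw : list (list letter), length tw = k /\
    forall i, i < k -> word_over n (nth i tw []) /\ eval_word G gen (nth i tw []) = a i.
Proof.
  intros Hs. induction k. exists []. split; auto. intros; lia.
  destruct IHk as [tw [Hl Ht]]. destruct (Hs (a k)) as [w [Hw Hw']].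
  exists (tw ++ [w]). split. rewrite length_app. simpl. lia.
  intros i Hi. destruct (Nat.eq_dec i k).
  - rewrite app_nth2 by lia. rewrite Hl, e, Nat.sub_diag. auto.
  - rewrite app_nth1 by lia. apply Ht. lia.
Qed.

Definition dec (l : nat) : letter := (Nat.div2 l, Nat.odd l).
Lemma lc_dec l : letter_code (dec l) = l.
Proof. unfold letter_code, dec. simpl. pose proof (Nat.div2_odd l) as E. destruct (Nat.odd l); simpl in *; lia. Qed.
Lemma dec_lc a : dec (letter_code a) = a.
Proof.
  destruct a as [i b]. unfold dec, letter_code. cbn [fst snd]. destruct b.
  - replace (2 * i + 1) with (S (2 * i)) by lia. rewrite Nat.div2_succ_double, Nat.odd_succ, Nat.even_mul. reflexivity.
  - rewrite Nat.add_0_r, Nat.div2_double, Nat.odd_mul. reflexivity.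
Qed.
Lemma par_odd m : par m = b2n (Nat.odd m).
Proof.
  induction m. reflexivity. unfold par in *. cbn [nat_rect]. rewrite IHm.
  rewrite Nat.odd_succ, <- Nat.negb_odd. destruct (Nat.odd m); reflexivity.
Qed.
Lemma flip_lc i b : flip (letter_code (i, b)) = letter_code (i, negb b).
Proof.
  unfold flip. rewrite par_odd. unfold letter_code. cbn [fst snd]. destruct b; cbn [negb].
  - replace (2 * i + 1) with (S (2 * i)) by lia. rewrite Nat.odd_succ, Nat.even_mul. cbn. lia.
  - rewrite Nat.add_0_r, Nat.odd_mul. cbn. lia.
Qed.
Lemma dec_flip l : dec (flip l) = (fst (dec l), negb (snd (dec l))).
Proof.
  rewrite <- (lc_dec l) at 1. destruct (dec l) as [i b]. rewrite flip_lc, dec_lc. reflexivity.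
Qed.

Lemma map_dec_lc w : map dec (map letter_code w) = w.
Proof. rewrite map_map. erewrite map_ext; [apply map_id|]. apply dec_lc. Qed.
Lemma map_lc_dec x : map letter_code (map dec x) = x.
Proof. rewrite map_map. erewrite map_ext; [apply map_id|]. apply lc_dec. Qed.

Lemma rst_map {A B} (R1 : A -> A -> Prop) (R2 : B -> B -> Prop) (f : A -> B) :
  (forall x y, R1 x y -> R2 (f x) (f y)) -> forall x y, clos_refl_sym_trans _ R1 x y -> clos_refl_sym_trans _ R2 (f x) (f y).
Proof.
  intros H x y Hr. induction Hr. apply rst_step; auto. apply rst_refl. apply rst_sym; auto. eapply rst_trans; eauto.
Qed.

Definition Rcode (R : list letter -> Prop) (m : nat) := exists w, word_code w = m /\ R w.

Lemma pstep_nstep n R x y : pstep n R x y -> nstep n (Rcode R) (map letter_code x) (map letter_code y).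
Proof.
  destruct 1 as [u v i b Hi|u v r Hr]; rewrite !map_app.
  - cbn [map]. rewrite <- flip_lc. apply ns_free. unfold letter_code. simpl. destruct b; lia.
  - apply ns_rel. exists r. auto.
Qed.

Lemma nstep_pstep n R x y : nstep n (Rcode R) x y -> pstep n R (map dec x) (map dec y).
Proof.
  destruct 1 as [u v l Hl|u v p [w [Hw Hr]]]; rewrite !map_app.
  - cbn [map]. rewrite dec_flip. destruct (dec l) as [i b] eqn:E. cbn [fst snd]. apply ps_free.
    pose proof (lc_dec l). rewrite E in H. unfold letter_code in H. simpl in H. destruct b; lia.
  - unfold word_code in Hw. apply code_inj in Hw. subst p. rewrite map_dec_lc. apply ps_rel. auto.
Qed.

Lemma triv_iff n R w : trivial_in_pres n R w <-> clos_refl_sym_trans _ (nstep n (Rcode R)) (map letter_code w) [].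
Proof.
  unfold trivial_in_pres. split; intros H.
  - apply (rst_map _ (nstep n (Rcode R)) (map letter_code)) in H. exact H. apply pstep_nstep.
  - apply (rst_map _ (pstep n R) (map dec)) in H. rewrite map_dec_lc in H. exact H. apply nstep_pstep.
Qed.

Lemma factor_S {A} (x : Z -> A) i q : factor x i (S q) = x i :: factor x (i + 1)%Z q.
Proof.
  unfold factor. rewrite <- cons_seq. cbn [map]. rewrite Z.add_0_r. f_equal.
  rewrite <- seq_shift, map_map. apply map_ext. intros j. f_equal. lia.
Qed.

Lemma factor_app {A} (x : Z -> A) i p q : factor x i (p + q) = factor x i p ++ factor x (i + Z.of_nat p)%Z q.
Proof.
  revert i; induction p; intros i. simpl. rewrite Z.add_0_r. reflexivity.
  simpl plus. rewrite !factor_S, IHp. simpl. f_equal. f_equal. f_equal. lia.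
Qed.

Lemma length_factor {A} (x : Z -> A) i q : length (factor x i q) = q.
Proof. unfold factor. rewrite length_map, length_seq. reflexivity. Qed.

Lemma firstn_factor {A} (x : Z -> A) i j L : j <= L -> firstn j (factor x i L) = factor x i j.
Proof.
  intros H. replace L with (j + (L - j)) by lia. rewrite factor_app, firstn_app, length_factor, Nat.sub_diag.
  rewrite firstn_all2 by (rewrite length_factor; lia). simpl. apply app_nil_r.
Qed.

Lemma index_word {T} (A : T -> Prop) (k : nat) (a : nat -> T) (x : Z -> T) :
  (forall t, A t -> exists i, i < k /\ a i = t) -> (forall j, A (x j)) ->
  forall L i, exists w, length w = L /\ Forall (fun j => j < k) w /\ map a w = factor x i L.
Proof.
  intros HA Hx L. induction L; intros i. exists []. simpl. auto.
  destruct (HA (x i) (Hx i)) as [c [Hc Hc']]. destruct (IHL (i + 1)%Z) as [w [H1 [H2 H3]]].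
  exists (c :: w). rewrite factor_S. simpl. split; auto. split. constructor; auto. congruence.
Qed.

Definition TauE (tab : list nat) e := FoldL 0 (App (Var 0) (Tab tab (Var 1))) Zero e [].
Definition tauL (tw : list (list letter)) (u : list nat) : list letter := concat (map (fun i => nth i tw []) u).

Lemma den_tau tw e env U : den e env = code_list U ->
  den (TauE (map (fun w => code_list (map letter_code w)) tw) e) env = code_list (map letter_code (tauL tw U)).
Proof.
  intros H. unfold TauE. rewrite (den_fold _ _ _ _ _ _ U) by auto. cbn [den map].
  assert (forall P, fold_left (fun acc x => den (App (Var 0) (Tab (map (fun w => code_list (map letter_code w)) tw) (Var 1))) [acc; x]) U
      (code_list (map letter_code (tauL tw P))) = code_list (map letter_code (tauL tw (P ++ U)))).
  { clear H. induction U as [|x U IH]; intros P; simpl. rewrite app_nil_r. reflexivity.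
    rewrite (den_app _ _ _ (map letter_code (tauL tw P)) (map letter_code (nth x tw []))).
    - replace (P ++ x :: U) with ((P ++ [x]) ++ U) by (rewrite <- app_assoc; reflexivity).
      rewrite <- IH. f_equal. f_equal. unfold tauL. rewrite map_app, concat_app, map_app. simpl. rewrite app_nil_r. reflexivity.
    - reflexivity.
    - rewrite den_tab. cbn [den nth].
      rewrite <- (map_nth (fun w => code_list (map letter_code w)) tw [] x). reflexivity. }
  apply (H0 []).
Qed.

Definition Body2 n BE tab := Call (Check n BE) [TauE tab (Firstn (Var 1) (Var 2)); Var 0].
Definition Body1 n BE tab := And (Lt Zero (Var 0)) (Bex (Suc (Len (Var 1))) (Body2 n BE tab) [Var 0; Var 1]).
Definition Dex n BE tab k := And (AllLt (Var 0) (cst k)) (Bex (Suc (Len (Var 0))) (Body1 n BE tab) [Var 0]).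

Lemma b2n_01 b : b2n b = 0 \/ b2n b = 1.
Proof. destruct b; auto. Qed.
Lemma negb_b2n b : negb (b2n b =? 0) = b.
Proof. destruct b; reflexivity. Qed.
Lemma b2n_1 b : b2n b = 1 <-> b = true.
Proof. destruct b; simpl; split; congruence. Qed.

Lemma existsb_ext' {A} (f g : A -> bool) l : (forall x, f x = g x) -> existsb f l = existsb g l.
Proof. intros H. induction l; simpl; auto. rewrite H, IHl. reflexivity. Qed.

Lemma den_D n BE tw k u :
  den (Dex n BE (map (fun w => code_list (map letter_code w)) tw) k) [code_list u] =
  b2n (forallb (fun x => x <? k) u &&
       existsb (fun j => (0 <? j) && existsb (fun C => negb (den (Check n BE) [code_list (map letter_code (tauL tw (firstn j u))); C] =? 0))
                                       (seq 0 (S (length u)))) (seq 0 (S (length u)))).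
Proof.
  unfold Dex. rewrite den_and, den_bex, (den_alllt _ _ _ u) by reflexivity. rewrite den_cst, negb_b2n, negb_b2n.
  cbn [den map nth]. rewrite (den_len _ _ u) by reflexivity. f_equal. f_equal.
  apply existsb_ext'. intros j.
  unfold Body1. rewrite den_and, den_lt, negb_b2n, den_bex, negb_b2n. cbn [den map nth].
  rewrite (den_len _ _ u) by reflexivity. f_equal. rewrite negb_b2n.
  apply existsb_ext'. intros C. unfold Body2. cbn [den map nth].
  rewrite (den_tau tw _ _ (firstn j u)). reflexivity. apply den_firstn. reflexivity.
Qed.

Lemma eval_tauL (G : group) n (gen : nat -> G) (a : nat -> G) k tw :
  (forall i, i < k -> word_over n (nth i tw []) /\ eval_word G gen (nth i tw []) = a i) ->
  forall u, Forall (fun j => j < k) u ->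
  word_over n (tauL tw u) /\ eval_word G gen (tauL tw u) = prodG G (map a u).
Proof.
  intros Htw u Hu. induction Hu as [|x u Hx Hu IH]. split. constructor. reflexivity.
  unfold tauL in *. cbn [map concat]. destruct (Htw x Hx) as [H1 H2]. destruct IH as [H3 H4]. split.
  - apply Forall_app. auto.
  - rewrite eval_word_app, H2, H4. reflexivity.
Qed.

Theorem proposition4 (G : group) :
  recursively_presented G ->
  forall S : list G, generates G S -> effective_subshift (alph G S) (skeleton G S).
Proof.
  intros [n [gen [R [HRo [[cR HcR] [Hsurj Hker]]]]]] S _.
  destruct (enum_alph G S) as [k [a [Hinj Ha]]].
  destruct (tau_ex G n gen a k Hsurj) as [tw [Htwl Htw]].
  set (BE := compile cR 1).
  assert (HBE : BEok BE (Rcode R)).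
  { intros m. split.
    - intros [t Ht]. destruct (den BE [t; m]) eqn:E; [congruence|].
      apply sound in E; [|reflexivity]. apply HcR. eauto.
    - intros Hm. apply HcR in Hm as [y Hy]. destruct (compl _ _ _ Hy 1 eq_refl) as [t0 Ht0].
      exists t0. unfold BE. rewrite Ht0; auto. }
  set (tab := map (fun w => code_list (map letter_code w)) tw).
  set (D := Dex n BE tab k).
  assert (Htriv : forall u, Forall (fun j => j < k) u ->
     ((exists C, den (Check n BE) [code_list (map letter_code (tauL tw u)); C] <> 0) <-> prodG G (map a u) = gone G)).
  { intros u Hu. rewrite (check_spec n BE (Rcode R) _ HBE). rewrite <- triv_iff.
    destruct (eval_tauL G n gen a k tw Htw u Hu) as [Ho He]. rewrite <- Hker by auto. rewrite He. tauto. }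
  assert (HD : forall u, den D [code_list u] = 1 <->
     (Forall (fun j => j < k) u /\ exists j C, 0 < j <= length u /\ C <= length u /\
        den (Check n BE) [code_list (map letter_code (tauL tw (firstn j u))); C] <> 0)).
  { intros u. unfold D, tab. rewrite den_D, b2n_1, andb_true_iff, forallb_forall, existsb_exists.
    rewrite Forall_forall. split.
    - intros [H1 [j [Hj Hj']]]. split. intros x Hx. apply Nat.ltb_lt. auto.
      apply andb_true_iff in Hj' as [Hj1 Hj2]. apply existsb_exists in Hj2 as [C [HC HC']].
      apply in_seq in Hj, HC. apply Nat.ltb_lt in Hj1. exists j, C. split; [lia|]. split; [lia|].
      destruct (den _ _ =? 0) eqn:E; simpl in HC'; [discriminate|]. apply Nat.eqb_neq in E. auto.
    - intros [H1 [j [C [Hj [HC Hc]]]]]. split. intros x Hx. apply Nat.ltb_lt. auto.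
      exists j. split. apply in_seq. lia. apply andb_true_iff. split. apply Nat.ltb_lt. lia.
      apply existsb_exists. exists C. split. apply in_seq. lia. apply Nat.eqb_neq in Hc. rewrite Hc. reflexivity. }
  assert (HD01 : forall m, den D [m] = 0 \/ den D [m] = 1).
  { intros m. unfold D, Dex. rewrite den_and. apply b2n_01. }
  exists k, a. split; [exact Hinj|]. split; [exact Ha|].
  exists (fun w => den D [code_list w] = 1). split; [|split].
  - intros w Hw. apply HD in Hw. tauto.
  - destruct (rep_den D 1) as [c Hc]. exists c. intros m. destruct (code_surj m) as [u <-].
    specialize (Hc [code_list u] eq_refl). split.
    + intros [w [Hw Hw']]. apply code_inj in Hw. subst w. rewrite Hw' in Hc. exact Hc.
    + intros Hn. destruct (HD01 (code_list u)) as [E|E]. rewrite E in Hc. exact Hc.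
      exfalso. apply Hn. eauto.
  - intros x. split.
    + intros [Halph Hprod]. split; auto. intros i w Hw Heq. apply HD in Hw as [Hk [j [C [Hj [HC Hc]]]]].
      assert (Hp : prodG G (map a (firstn j w)) = gone G).
      { assert (Hk1 : Forall (fun j => j < k) (firstn j w)).
        { rewrite <- (firstn_skipn j w) in Hk. apply Forall_app in Hk. tauto. }
        apply (Htriv _ Hk1). eauto. }
      rewrite <- firstn_map, <- Heq, firstn_factor in Hp by lia.
      apply (Hprod i j); auto. lia.
    + intros [Halph Havoid]. split; auto. intros i n0 Hn0 Hp.
      assert (HA : forall t, alph G S t -> exists i, i < k /\ a i = t) by (intros; apply Ha; auto).
      destruct (index_word _ k a x HA Halph n0 i) as [w0 [Hl0 [Hk0 Hm0]]].
      rewrite <- Hm0 in Hp. apply (Htriv _ Hk0) in Hp as [C HC].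
      destruct (index_word _ k a x HA Halph C (i + Z.of_nat n0)%Z) as [w1 [Hl1 [Hk1 Hm1]]].
      apply (Havoid i (w0 ++ w1)).
      * apply HD. split. apply Forall_app; auto.
        exists n0, C. rewrite length_app. split; [lia|]. split; [lia|].
        rewrite firstn_app, Hl0, Nat.sub_diag, firstn_all2 by lia. simpl. rewrite app_nil_r. exact HC.
      * rewrite length_app, Hl0, Hl1, factor_app, map_app, Hm0, Hm1. reflexivity.
Qed.
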